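(* Let $M=(S,\mathrm{Act},P)$ be an MDP, $T\subseteq S$, $\mathrm{rew}\colon S\to\mathbb{R}_{\ge0}$. Let $(x,r)\in[0,\infty]^S\times\mathbb{N}_\infty^S$ satisfy: (1) $D^{\max}(r)\le r$; (2) $E^{\max}(x)\le x$; (3) for all $s\in S$, $x(s)<\infty$ implies $r(s)<\infty$ (inequalities pointwise). Then $\mathbb{E}^{\max}_s(\Diamond T)\le x(s)$ for all $s\in S$.
   Context: An MDP is a tuple $M=(S,\mathrm{Act},P)$ with $S$ finite, $\mathrm{Act}$ finite, $P\colon S\times\mathrm{Act}\times S\to[0,1]$ with $\sum_{s'}P(s,a,s')\in\{0,1\}$; $\mathrm{Act}(s)=\{a\mid\sum_{s'}P(s,a,s')=1\}$ is nonempty for all $s$; $\mathrm{Post}(s,a)=\{s'\mid P(s,a,s')>0\}$. A strategy is $\sigma\colon S\to\mathrm{Act}$ with $\sigma(s)\in\mathrm{Act}(s)$, inducing a Markov chain with transitions $P(s,\sigma(s),\cdot)$. For an infinite path $s_0s_1\ldots$, the accumulated reward is $\sum_{k=0}^{n-1}\mathrm{rew}(s_k)$ with $n=\min\{i\mid s_i\in T\}$ if $T$ is visited, and $\infty$ otherwise; $\mathbb{E}^\sigma_s(\Diamond T)$ is its expectation under $\sigma$ from $s$, and $\mathbb{E}^{\max}_s(\Diamond T)=\max_\sigma\mathbb{E}^\sigma_s(\Diamond T)$. $E^{\max}(x)(s)=0$ for $s\in T$ and $\mathrm{rew}(s)+\max_{a\in\mathrm{Act}(s)}\sum_{s'\in\mathrm{Post}(s,a)}P(s,a,s')x(s')$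 for $s\notin T$, with $p\cdot\infty=\infty$ for $p>0$, $a+\infty=\infty$. $\mathbb{N}_\infty=\mathbb{N}\cup\{\infty\}$, $1+\infty=\infty$; $D^{\max}(r)(s)=0$ for $s\in T$ and $1+\max_{a\in\mathrm{Act}(s)}\min_{s'\in\mathrm{Post}(s,a)}r(s')$ for $s\notin T$. *)

(* Defs.v *)
From HB Require Import structures.
From mathcomp Require Import all_boot all_order all_algebra.
From mathcomp Require Import all_classical all_reals all_analysis.
Set Implicit Arguments. Unset Strict Implicit. Unset Printing Implicit Defensive.
Import Order.TTheory GRing.Theory Num.Theory.
Local Open Scope ring_scope.

Section MDP.
Variables (R : realType) (S Act : finType) (P : S -> Act -> S -> R).

Definition is_MDP : Prop :=
  (forall s a s', 0 <= P s a s' <= 1) /\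
  (forall s a, \sum_(s' : S) P s a s' = 0 \/ \sum_(s' : S) P s a s' = 1) /\
  (forall s, exists a, \sum_(s' : S) P s a s' = 1).

Definition enabled (s : S) : pred Act := fun a => \sum_(s' : S) P s a s' == 1.
Definition Post (s : S) (a : Act) : pred S := fun s' => 0 < P s a s'.

Definition strategy (sigma : S -> Act) : Prop := forall s, sigma s \in enabled s.

Variables (T : {set S}) (rew : S -> R).

(* reach sigma k s s' = probability, in the Markov chain induced by sigma,
   of the length-k path prefixes s = s_0 ... s_k = s' with s_0..s_{k-1} not in T. *)
Fixpoint reach (sigma : S -> Act) (k : nat) (s s' : S) : R :=
  match k with
  | 0 => (s == s')%:R
  | k.+1 => if s \in T then 0
            else \sum_(u : S) P s (sigma s) u * reach sigma k u s'
  end.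

Local Open Scope ereal_scope.

(* Pr^sigma_s(<> T) = sum over k of the probability that T is first visited at step k *)
Definition prob_reach (sigma : S -> Act) (s : S) : \bar R :=
  \sum_(0 <= k <oo) (\sum_(s' in T) reach sigma k s s')%R%:E.

(* Paths visiting T contribute
   sum_k E[rew(s_k); k < first visit of T]; paths never visiting T have reward oo
   and contribute oo * Pr(never visit T) (with 0 * oo = 0). *)
Definition exp_rew (sigma : S -> Act) (s : S) : \bar R :=
  \sum_(0 <= k <oo) (\sum_(s' in ~: T) reach sigma k s s' * rew s')%R%:E
  + +oo * (1 - prob_reach sigma s).

(* E^max_s(<> T) = max over strategies (finitely many, so sup = max) *)
Definition exp_rew_max (s : S) : \bar R :=
  ereal_sup [set exp_rew sigma s | sigma in strategy].

Definition Emax_op (x : S -> \bar R) (s : S) : \bar R :=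
  if s \in T then 0
  else (rew s)%:E +
       \big[maxe/-oo]_(a | a \in enabled s) \sum_(s' | s' \in Post s a) (P s a s')%:E * x s'.

End MDP.

(* N_oo = nat + {oo}, with None = oo *)
Definition ninf := option nat.
Definition ninf_le (m n : ninf) : bool :=
  match m, n with
  | _, None => true
  | None, Some _ => false
  | Some a, Some b => (a <= b)%N
  end.
Definition ninf_min (m n : ninf) : ninf := if ninf_le m n then m else n.
Definition ninf_max (m n : ninf) : ninf := if ninf_le m n then n else m.
Definition ninf_succ (m : ninf) : ninf := omap succn m.

Section Dop.
Variables (R : realType) (S Act : finType) (P : S -> Act -> S -> R) (T : {set S}).
Definition Dmax_op (r : S -> ninf) (s : S) : ninf :=
  if s \in T then Some 0%N
  else ninf_succ (\big[ninf_max/Some 0%N]_(a | a \in enabled P s)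
                    \big[ninf_min/None]_(s' | s' \in Post P s a) r s').
End Dop.

(* Main.v *)
Require Import Defs.
From HB Require Import structures.
From mathcomp Require Import all_boot all_order all_algebra.
From mathcomp Require Import all_classical all_reals all_analysis.
Import Order.TTheory GRing.Theory Num.Theory.
Local Open Scope ring_scope.

Section Reach.
Variables (R : realType) (S Act : finType) (P : S -> Act -> S -> R) (T : {set S}).
Hypothesis HP0 : forall s a t, 0 <= P s a t.
Variable sigma : S -> Act.
Hypothesis Hsig : forall s, \sum_t P s (sigma s) t = 1.

Local Notation rc := (reach P T sigma).

Lemma reach_ge0 k s t : 0 <= rc k s t.
Proof.
elim: k s => [|k IH] s /=; first by rewrite ler0n.
case: (s \in T) => //; apply: sumr_ge0 => u _; exact: mulr_ge0.
Qed.

Lemma step_sum n s (g : S -> R) :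
  \sum_t rc n.+1 s t * g t =
  if s \in T then 0 else \sum_u P s (sigma s) u * \sum_t rc n u t * g t.
Proof.
rewrite /=; case: (s \in T); first by rewrite big1 // => t _; rewrite mul0r.
under eq_bigr do rewrite mulr_suml.
rewrite exchange_big /=; apply: eq_bigr => u _.
by rewrite mulr_sumr; apply: eq_bigr => t _; rewrite mulrA.
Qed.

Lemma sum_rc0 s (g : S -> R) : \sum_t rc 0 s t * g t = g s.
Proof.
rewrite (bigD1 s) //= eqxx mul1r big1 ?addr0 // => t /negbTE; rewrite eq_sym => ->.
by rewrite mul0r.
Qed.

Definition H n (g : S -> R) s := \sum_(k < n) \sum_t rc k s t * g t.

Lemma H0 g s : H 0 g s = 0.
Proof. by rewrite /H big_ord0. Qed.

Lemma H_shift n g s :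
  H n.+1 g s = g s + (if s \in T then 0 else \sum_u P s (sigma s) u * H n g u).
Proof.
rewrite /H big_ord_recl /= sum_rc0; congr (_ + _).
under eq_bigr do rewrite /bump /= step_sum.
case: (s \in T); first by rewrite big1.
rewrite exchange_big /=; apply: eq_bigr => u _; by rewrite mulr_sumr.
Qed.

Lemma CK n m s t : rc (n + m) s t = \sum_u rc n s u * rc m u t.
Proof.
elim: n s => [|n IH] s.
  by rewrite add0n sum_rc0.
rewrite addSn /=; case: (s \in T).
  by rewrite big1 // => u _; rewrite mul0r.
under eq_bigr do rewrite IH mulr_sumr.
rewrite exchange_big /=; apply: eq_bigr => u _.
by rewrite mulr_suml; apply: eq_bigr => v _; rewrite mulrA.
Qed.

Definition gT t : R := (t \in T)%:R.
Definition Nn n s := \sum_t rc n s t * (t \notin T)%:R.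

Lemma HN n s : H n.+1 gT s + Nn n s = 1.
Proof.
elim: n s => [|n IH] s.
  rewrite H_shift /Nn sum_rc0 /gT; case: (s \in T); first by rewrite /= !addr0.
  by rewrite big1 ?add0r ?addr0 // => u _; rewrite H0 mulr0.
rewrite H_shift /Nn step_sum /gT; case: (s \in T); first by rewrite /= !addr0.
rewrite /= !add0r -big_split /=; rewrite -[RHS](Hsig s); apply: eq_bigr => u _.
by rewrite -mulrDr -[X in _ * X = _]/(H n.+1 gT u + Nn n u) IH mulr1.
Qed.

Lemma H_ge0 n g s : (forall t, 0 <= g t) -> 0 <= H n g s.
Proof.
move=> hg; apply: sumr_ge0 => k _; apply: sumr_ge0 => t _.
exact: mulr_ge0 (reach_ge0 _ _ _) (hg t).
Qed.

Lemma Nn_CK n m s : Nn (n + m) s = \sum_u rc n s u * Nn m u.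
Proof.
rewrite /Nn; under eq_bigr do rewrite CK mulr_suml.
rewrite exchange_big /=; apply: eq_bigr => u _.
by rewrite mulr_sumr; apply: eq_bigr => t _; rewrite mulrA.
Qed.

Lemma Nn_T m u : u \in T -> Nn m.+1 u = 0.
Proof. by move=> uT; rewrite /Nn step_sum uT. Qed.

Lemma Nn0 s : Nn 0 s <= 1.
Proof. by rewrite /Nn sum_rc0; case: (s \notin T). Qed.

End Reach.

Lemma ninf_le_trans a b c : ninf_le a b -> ninf_le b c -> ninf_le a c.
Proof.
case: a => [a|]; case: b => [b|]; case: c => [c|] //=; exact: leq_trans.
Qed.

Lemma ninf_le_maxl a b c : ninf_le a b -> ninf_le a (ninf_max b c).
Proof.
rewrite /ninf_max; case E: (ninf_le b c) => // h; exact: ninf_le_trans h E.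
Qed.

Lemma ninf_le_maxr a b c : ninf_le a c -> ninf_le a (ninf_max b c).
Proof.
rewrite /ninf_max; case E: (ninf_le b c) => // h.
apply: ninf_le_trans h _; move: E; case: b => [b|]; case: c => [c|] //=.
by move/negbT; rewrite -ltnNge => /ltnW.
Qed.

Lemma bigmax_ninf (I : eqType) (l : seq I) (Pr : pred I) (F : I -> ninf) a :
  a \in l -> Pr a -> ninf_le (F a) (\big[ninf_max/Some 0%N]_(i <- l | Pr i) F i).
Proof.
elim: l => [|b l IH] //; rewrite inE big_cons => /orP [/eqP <-|al] Pa.
  by rewrite Pa; apply: ninf_le_maxl; case: (F a) => //=.
case: (Pr b); last exact: IH.
by apply: ninf_le_maxr; exact: IH.
Qed.

Lemma bigmin_ninf (I : eqType) (l : seq I) (Pr : pred I) (F : I -> ninf) m :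
  ninf_le (\big[ninf_min/None]_(i <- l | Pr i) F i) (Some m) ->
  exists i, [/\ i \in l, Pr i & exists2 j, F i = Some j & (j <= m)%N].
Proof.
elim: l => [|b l IH]; first by rewrite big_nil.
rewrite big_cons; case Pb: (Pr b); last first.
  by move=> /IH [i [il Pi Fi]]; exists i; split => //; rewrite inE il orbT.
rewrite /ninf_min; case: ifP => _.
  case Fb: (F b) => [j|] //= hj; exists b; split => //; first by rewrite inE eqxx.
  by exists j.
by move=> /IH [i [il Pi Fi]]; exists i; split => //; rewrite inE il orbT.
Qed.
Local Open Scope ring_scope.

Section Main.
Variables (R : realType) (S Act : finType) (P : S -> Act -> S -> R)
  (T : {set S}) (rew : S -> R) (x : S -> \bar R) (r : S -> ninf).
Hypothesis HP0 : forall s a t, 0 <= P s a t.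
Hypothesis HP1 : forall s a t, P s a t <= 1.
Hypothesis Hrew : forall s, 0 <= rew s.
Hypothesis Hx0 : forall s, (0 <= x s)%E.
Hypothesis HD : forall s, ninf_le (Dmax_op P T r s) (r s).
Hypothesis HE : forall s, (Emax_op P T rew x s <= x s)%E.
Hypothesis Hxr : forall s, (x s < +oo)%E -> r s <> None.
Variable sigma : S -> Act.
Hypothesis Hsig : forall s, sigma s \in enabled P s.

Let Hsum s : \sum_t P s (sigma s) t = 1.
Proof. exact: eqP (Hsig s). Qed.

Local Notation rc := (reach P T sigma).
Local Notation HH := (@H R S Act P T sigma).

Lemma Emax_ge s : s \notin T ->
  ((rew s)%:E + \sum_(u | u \in Post P s (sigma s)) (P s (sigma s) u)%:E * x u <= x s)%E.
Proof.
move=> sT; apply: le_trans (HE s); rewrite /Emax_op (negbTE sT) leeD2l //.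
exact: le_bigmax_cond (Hsig s).
Qed.

Lemma stepF s u : s \notin T -> (x s < +oo)%E -> 0 < P s (sigma s) u -> (x u < +oo)%E.
Proof.
move=> sT xs Pu; rewrite ltey; apply/negP => /eqP xu.
have := Emax_ge s sT; rewrite (bigD1 u) //= xu mulry gtr0_sg // mul1e addye; last first.
  rewrite gt_eqF //; apply: (lt_le_trans (ltNyr 0)); apply: sume_ge0 => v _.
  by apply: mule_ge0; rewrite ?lee_fin.
rewrite addey // leye_eq => /eqP xsy; by rewrite xsy in xs.
Qed.

Lemma reachF n s u : (x s < +oo)%E -> rc n s u != 0 -> (x u < +oo)%E.
Proof.
elim: n s => [|n IH] s xs /=.
  by case: (s =P u) => [<-|] //; rewrite eqxx.
case sT: (s \in T); first by rewrite eqxx.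
move=> h; have [v _ hv] : exists2 v, true & P s (sigma s) v * rc n v u != 0.
  apply/exists_inP; apply: contraNT h => /exists_inPn h.
  by apply/eqP; apply: big1 => v _; apply/eqP/negPn/h.
move: hv; rewrite mulf_eq0 negb_or => /andP [Pv rv].
apply: IH rv; apply: (stepF s v) => //; first by rewrite sT.
by rewrite lt_def Pv HP0.
Qed.

Definition gR t : R := (t \notin T)%:R * rew t.

Lemma W_le n s : ((HH n gR s)%:E <= x s)%E.
Proof.
elim: n s => [|n IH] s; first by rewrite H0.
rewrite H_shift; case sT: (s \in T).
  by rewrite /gR sT mul0r addr0.
apply: le_trans (Emax_ge s _); last by rewrite sT.
rewrite EFinD /gR sT mul1r leeD2l // -sumEFin [X in (_ <= X)%E]big_mkcond /= lee_sum // => u _.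
case: ifP => Pu.
  by rewrite EFinM; apply: lee_wpmul2l; rewrite ?lee_fin.
have -> : P s (sigma s) u = 0.
  apply/eqP; rewrite eq_le HP0 andbT leNgt; apply/negP => h.
  by move: Pu; rewrite /Post unfold_in h.
by rewrite mul0r.
Qed.

Definition cc : R := \prod_(t : S * Act * S | 0 < P t.1.1 t.1.2 t.2) P t.1.1 t.1.2 t.2.

Lemma cc_gt0 : 0 < cc.
Proof. by apply: prodr_gt0 => t. Qed.

Lemma cc_le s a u : 0 < P s a u -> cc <= P s a u.
Proof.
move=> Pu; rewrite /cc (bigD1 (s, a, u)) //=.
rewrite ger_pMr // prodr_ile1 // => t _; by rewrite HP0 HP1.
Qed.

Lemma cc_le1 : cc <= 1.
Proof. by rewrite prodr_ile1 // => t _; rewrite HP0 HP1. Qed.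

Definition gT' t : R := (t \in T)%:R.

Lemma claim k s j : r s = Some j -> (j <= k)%N -> cc ^+ k <= HH k.+1 gT' s.
Proof.
elim: k s j => [|k IH] s j rs jk.
  case sT: (s \in T).
    by rewrite H_shift /gT' sT addr0 expr0.
  have := HD s; rewrite /Dmax_op sT rs.
  by case: (\big[_/_]_(a | _) _) => //=; move: jk; rewrite leqn0 => /eqP ->.
rewrite H_shift; case sT: (s \in T).
  rewrite /gT' sT addr0; apply: exprn_ile1; [exact: ltW cc_gt0 | exact: cc_le1].
have := HD s; rewrite /Dmax_op sT rs.
case EM: (\big[_/_]_(a | _) _) => [m|] //= hm.
have := @bigmax_ninf _ _ _ (fun a => \big[ninf_min/None]_(s' | s' \in Post P s a) r s')
  (sigma s) (mem_index_enum _) (Hsig s).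
rewrite EM => /bigmin_ninf [u [_ Pu [j' ru j'm]]].
have := IH u j' ru; rewrite (leq_trans j'm) //; last first.
  by rewrite -ltnS (leq_trans hm).
move=> /(_ isT) hu; rewrite /gT' sT add0r (bigD1 u) //= exprS.
apply: le_trans (_ : P s (sigma s) u * HH k.+1 gT' u <= _).
  apply: ler_pM hu; first exact: ltW cc_gt0.
    exact: exprn_ge0 (ltW cc_gt0).
  by apply: cc_le.
rewrite lerDl; apply: sumr_ge0 => v _; apply: mulr_ge0 => //.
by apply: H_ge0 => // t; rewrite /gT' ler0n.
Qed.

Definition KK : nat := \max_(s : S) odflt 0%N (r s).
Definition LL : nat := KK.+1.
Definition qq : R := 1 - cc ^+ LL.
Local Notation NN := (@Nn R S Act P T sigma).

Lemma qq_ge0 : 0 <= qq.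
Proof. by rewrite /qq subr_ge0 exprn_ile1 // ?cc_le1 // ltW // cc_gt0. Qed.

Lemma qq_lt1 : qq < 1.
Proof. by rewrite /qq ltrBlDr ltrDl exprn_gt0 // cc_gt0. Qed.

Lemma NN_le u : (x u < +oo)%E -> NN LL u <= qq * (u \notin T)%:R.
Proof.
move=> xu; case uT: (u \in T).
  by rewrite /= mulr0 /LL Nn_T.
rewrite /= mulr1 /qq.
case ru: (r u) => [j|]; last by have := Hxr u xu.
have hj : (j <= LL)%N.
  apply: leqW; rewrite /KK; have := @leq_bigmax _ (fun s => odflt 0%N (r s)) u.
  by rewrite ru.
have := claim _ _ _ ru hj; have := HN _ _ _ P T sigma Hsum LL u => <-.
move=> h; rewrite addrAC lerDr subr_ge0; exact: h.
Qed.

Lemma decay n s : (x s < +oo)%E -> NN (n + LL) s <= qq * NN n s.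
Proof.
move=> xs; rewrite Nn_CK /Nn mulr_sumr; apply: ler_sum => u _.
have r0 := reach_ge0 _ _ _ P T HP0 sigma n s u.
case: (eqVneq (rc n s u) 0) => [->|h]; first by rewrite !mul0r mulr0.
rewrite mulrCA; apply: ler_wpM2l => //; exact: NN_le (reachF n s u xs h).
Qed.

Lemma geo j s : (x s < +oo)%E -> NN (j * LL) s <= qq ^+ j.
Proof.
move=> xs; elim: j => [|j IH]; first by rewrite mul0n expr0 Nn0.
rewrite mulSn addnC exprS; apply: le_trans (decay _ _ xs) _.
by apply: ler_wpM2l => //; exact: qq_ge0.
Qed.

Lemma Hlow j s : (x s < +oo)%E -> 1 - qq ^+ j <= HH (j * LL).+1 gT' s.
Proof.
move=> xs; have := HN _ _ _ P T sigma Hsum (j * LL) s.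
move=> h; rewrite lerBlDr; rewrite -[X in X <= _]h lerD2l; exact: geo.
Qed.

Local Open Scope ereal_scope.

Lemma prob_ge n s : (HH n gT' s)%:E <= prob_reach P T sigma s.
Proof.
rewrite /prob_reach; apply: le_trans (nneseries_lim_ge n _); last first.
  move=> k _ _; rewrite lee_fin; apply: sumr_ge0 => t _.
  exact: reach_ge0 _ _ _ P T HP0 sigma k s t.
rewrite sumEFin big_mkord lee_fin le_eqVlt; apply/orP; left; apply/eqP.
apply: eq_bigr => k _; rewrite [RHS]big_mkcond; apply: eq_bigr => t _.
by rewrite /gT'; case: (t \in T); rewrite ?mulr1 ?mulr0.
Qed.

Lemma prob_one s : (x s < +oo)%E -> 1 <= prob_reach P T sigma s.
Proof.
move=> xs; apply/lee_addgt0Pr => e e0.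
have hq : (`|qq| < 1)%R by rewrite ger0_norm ?qq_lt1 //; exact: qq_ge0.
have := cvgr_lt _ (cvg_geometric 1 hq) e e0.
case=> N _ /(_ N (leqnn N)) /=; rewrite mul1r => hN.
apply: le_trans (_ : ((1 - qq ^+ N) + qq ^+ N)%:E <= _); first by rewrite subrK.
rewrite EFinD; apply: leeD; last by rewrite lee_fin ltW.
apply: le_trans (prob_ge (N * LL).+1 s); rewrite lee_fin; exact: Hlow.
Qed.

Lemma exp_rew_le s : exp_rew P T rew sigma s <= x s.
Proof.
case: (ltP (x s) +oo) => [xs|]; last by rewrite leye_eq => /eqP ->; exact: leey.
rewrite /exp_rew; apply: le_trans (geeDl _ _) _.
  by apply: mule_ge0_le0 => //; rewrite sube_le0; exact: prob_one.
apply: lime_le.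
  apply: is_cvg_nneseries => k _ _; rewrite lee_fin; apply: sumr_ge0 => t _.
  by apply: mulr_ge0 => //; exact: reach_ge0 _ _ _ P T HP0 sigma k s t.
apply: nearW => n; apply: le_trans (W_le n s).
rewrite sumEFin big_mkord lee_fin le_eqVlt; apply/orP; left; apply/eqP.
rewrite /H; apply: eq_bigr => k _; rewrite [LHS]big_mkcond; apply: eq_bigr => t _.
by rewrite /gR inE; case: (t \in T) => /=; rewrite ?mul1r ?mul0r ?mulr0.
Qed.

End Main.

Theorem proposition8 (R : realType) (S Act : finType) (P : S -> Act -> S -> R)
  (T : {set S}) (rew : S -> R) (x : S -> \bar R) (r : S -> ninf) :
  is_MDP P ->
  (forall s, 0 <= rew s) ->
  (forall s, (0 <= x s)%E) ->
  (forall s, ninf_le (Dmax_op P T r s) (r s)) ->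
  (forall s, (Emax_op P T rew x s <= x s)%E) ->
  (forall s, (x s < +oo)%E -> r s <> None) ->
  forall s, (exp_rew_max P T rew s <= x s)%E.
Proof.
move=> [HP _] Hrew Hx0 HD HE Hxr s.
have HP0 : forall s a t, 0 <= P s a t by move=> a b c; have /andP[] := HP a b c.
have HP1 : forall s a t, P s a t <= 1 by move=> a b c; have /andP[] := HP a b c.
apply: ge_ereal_sup => _ [sigma Hsig <-].
by apply: exp_rew_le.
Qed.
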